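(* Consider the discrete-time fractional-order system $\Delta^{\alpha}x[k+1]=Ax[k]+Bu[k]$ with $x[k]\in\mathbb{R}^n$, $u[k]\in\mathbb{R}^p$, and fix $K\ge1$. For $S\subseteq[n]=\{1,\dots,n\}$ let $\mathbb{I}^S$ be the matrix formed by the rows of $I_n$ indexed by $S$, and let $f(S)=\operatorname{rank}([\Theta\ \ \Xi])$ where $\Theta,\Xi$ are constructed as in the context with $C=\mathbb{I}^S$. Then $f:2^{[n]}\to\mathbb{R}$ is submodular, i.e., $f(S\cup T)+f(S\cap T)\le f(S)+f(T)$ for all $S,T\subseteq[n]$.
   Context: $\psi(\alpha_i,j)=\frac{\Gamma(j-\alpha_i)}{\Gamma(-\alpha_i)\Gamma(j+1)}$ and $\Delta^{\alpha_i}x_i[k]=\sum_{j=0}^{k}\psi(\alpha_i,j)x_i[k-j]$. $D(\alpha,j)=\operatorname{diag}(\psi(\alpha_1,j),\dots,\psi(\alpha_n,j))$, $A_0=A-D(\alpha,1)$, $A_j=-D(\alpha,j+1)$ for $j\ge1$, $G_0=I_n$, $G_k=\sum_{j=0}^{k-1}A_jG_{k-1-j}$. $\Theta=[(CG_0)^T,\dots,(CG_{K-1})^T]^T$ and $\Xi$ is the $K\times K$ block lower-triangular matrix whose $(r,s)$ block is $CG_{r-s-1}B$ for $r>s$ and $0$ otherwise. *)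

(* Defs.v *)
From HB Require Import structures.
From mathcomp Require Import all_boot all_order all_algebra.
From mathcomp Require Import reals.
Set Implicit Arguments. Unset Strict Implicit. Unset Printing Implicit Defensive.
Import Order.TTheory GRing.Theory Num.Theory.
Local Open Scope ring_scope.

Section FracDefs.
Variable R : realType.

(* psi(a,j) = Gamma(j-a)/(Gamma(-a) Gamma(j+1)) = prod_{i<j} (i - a)/(i+1) *)
Definition psi (a : R) (j : nat) : R :=
  \prod_(i < j) ((i%:R - a) / (i.+1)%:R).

Variable n : nat.

Definition Dmat (alpha : 'I_n -> R) (j : nat) : 'M[R]_n :=
  diag_mx (\row_i psi (alpha i) j).

Definition Amat (A : 'M[R]_n) (alpha : 'I_n -> R) (j : nat) : 'M[R]_n :=
  if j is 0 then A - Dmat alpha 1 else - Dmat alpha j.+1.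

Fixpoint Glist (A : 'M[R]_n) (alpha : 'I_n -> R) (k : nat) : seq 'M[R]_n :=
  match k with
  | 0 => [:: 1%:M]
  | k'.+1 => let l := Glist A alpha k' in
             rcons l (\sum_(j < k'.+1) Amat A alpha j *m nth 0 l (k' - j))
  end.

Definition Gmat (A : 'M[R]_n) (alpha : 'I_n -> R) (k : nat) : 'M[R]_n :=
  nth 0 (Glist A alpha k) k.

(* I^S : rows of I_n indexed by S (in increasing order) *)
Definition selmx (S : {set 'I_n}) : 'M[R]_(#|S|, n) :=
  \matrix_(i, j) (enum_val i == j)%:R.

Variable p : nat.

Definition Theta (A : 'M[R]_n) (alpha : 'I_n -> R) (K : nat) (m : nat)
    (C : 'M[R]_(m, n)) : 'M[R]_(\sum_(k < K) m, n) :=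
  \mxcol_(k < K) (C *m Gmat A alpha k).

Definition Xi (A : 'M[R]_n) (B : 'M[R]_(n, p)) (alpha : 'I_n -> R) (K : nat)
    (m : nat) (C : 'M[R]_(m, n)) : 'M[R]_(\sum_(r < K) m, \sum_(s < K) p) :=
  \mxblock_(r < K, s < K)
     (if (s < r)%N then C *m Gmat A alpha (r - s - 1) *m B else 0 : 'M[R]_(m, p)).

Definition frank (A : 'M[R]_n) (B : 'M[R]_(n, p)) (alpha : 'I_n -> R) (K : nat)
    (S : {set 'I_n}) : R :=
  (\rank (row_mx (Theta A alpha K (selmx S)) (Xi A B alpha K (selmx S))))%:R.

End FracDefs.

(* Main.v *)
Require Import Defs.
From HB Require Import structures.
From mathcomp Require Import all_boot all_order all_algebra.
From mathcomp Require Import reals.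
Import Order.TTheory GRing.Theory Num.Theory.
Local Open Scope ring_scope.
Set Implicit Arguments. Unset Strict Implicit.

Section S.
Variables (R : realType) (n p K : nat) (alpha : 'I_n -> R) (A : 'M[R]_n) (B : 'M[R]_(n, p)).

Lemma selmx_mul (S : {set 'I_n}) m (M : 'M[R]_(n, m)) :
  selmx R S *m M = rowsub enum_val M.
Proof.
apply/matrixP => i c; rewrite !mxE (bigD1 (enum_val i)) //= big1 ?addr0.
  by rewrite mxE eqxx mul1r.
by move=> j /negbTE nj; rewrite mxE eq_sym nj mul0r.
Qed.

Definition fS (S : {set 'I_n}) (s : 'I_(\sum_(k < K) #|S|)) : 'I_(\sum_(k < K) n) :=
  @tagnat.Rank K (fun _ => n) (tagnat.sig1 s) (enum_val (tagnat.sig2 s)).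

Arguments fS : clear implicits.
Definition Fm := row_mx (Theta A alpha K (1%:M : 'M[R]_n)) (Xi A B alpha K (1%:M : 'M[R]_n)).

Lemma sig1f S s : tagnat.sig1 (fS S s) = tagnat.sig1 s.
Proof. by rewrite /fS tagnat.Rank1K. Qed.
Lemma sig2f S s : tagnat.sig2 (fS S s) = enum_val (tagnat.sig2 s) :> 'I_n.
Proof. by apply: val_inj; rewrite /fS tagnat.Rank2K /=. Qed.

Lemma Mrow S : row_mx (Theta A alpha K (selmx R S)) (Xi A B alpha K (selmx R S)) = rowsub (fS S) Fm.
Proof.
rewrite /Fm; apply/matrixP => s c; rewrite !mxE.
case: (splitP c) => j _; rewrite !mxE.
  rewrite sig1f sig2f.
  transitivity ((selmx R S *m Gmat A alpha (tagnat.sig1 s)) (tagnat.sig2 s) j); first by rewrite mxE.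
  transitivity ((1%:M *m Gmat A alpha (tagnat.sig1 s)) (enum_val (tagnat.sig2 s)) j); last by rewrite mxE.
  by rewrite selmx_mul mul1mx mxE.
rewrite sig1f sig2f; case: ifP => _; last by rewrite !mxE.
by rewrite -mulmxA selmx_mul mul1mx !mxE.
Qed.

Definition XS (S : {set 'I_n}) : {set 'I_(\sum_(k < K) n)} :=
  [set t | @tagnat.sig2 K (fun _ => n) t \in S].

Lemma imfS S : fS S @: setT = XS S.
Proof.
apply/setP => t; rewrite inE; apply/imsetP/idP.
  by case=> x _ ->; rewrite sig2f enum_valP.
move=> h.
exists (@tagnat.Rank K (fun _ => #|S|) (tagnat.sig1 t) (enum_rank_in h (tagnat.sig2 t))).
  by rewrite in_setT.
apply/val_inj/eqP; rewrite -{1}(tagnat.sig2K t) /fS tagnat.eq_Rank.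
rewrite tagnat.Rank1K eqxx /=.
rewrite tagnat.Rank2K /=.
set z := enum_rank_in _ _; rewrite (_ : cast_ord _ z = z); last by apply: val_inj.
by rewrite /z enum_rankK_in.
Qed.
End S.

Section Gen.
Variables (F : fieldType) (N w : nat) (M : 'M[F]_(N, w)).
Definition W (X : {set 'I_N}) := (\sum_(i in X) <<row i M>>)%MS.

Lemma rowsub_eq m (f : 'I_m -> 'I_N) : (rowsub f M == W (f @: setT))%MS.
Proof.
apply/andP; split.
  apply/row_subP => x; rewrite row_rowsub.
  apply: (submx_trans _ (sumsmx_sup (f x) _ (submx_refl _))).
    by rewrite genmxE.
  by rewrite imset_f.
apply/sumsmx_subP => i /imsetP [x _ ->].
by rewrite genmxE -row_rowsub row_sub.
Qed.

Lemma W_sub (X Y : {set 'I_N}) : X \subset Y -> (W X <= W Y)%MS.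
Proof.
move=> XY; apply/sumsmx_subP => i iX.
exact: (sumsmx_sup i (subsetP XY i iX) (submx_refl _)).
Qed.

Lemma W_submod (X Y : {set 'I_N}) : (\rank (W (X :|: Y)) + \rank (W (X :&: Y)) <= \rank (W X) + \rank (W Y))%N.
Proof.
rewrite -(mxrank_sum_cap (W X) (W Y)) leq_add //.
  apply: mxrankS; rewrite {1}/W; apply/sumsmx_subP => i; rewrite inE => /orP [iX|iY].
    exact: (submx_trans (sumsmx_sup i iX (submx_refl _)) (addsmxSl _ _)).
  exact: (submx_trans (sumsmx_sup i iY (submx_refl _)) (addsmxSr _ _)).
by apply: mxrankS; rewrite sub_capmx !W_sub // ?subsetIl ?subsetIr.
Qed.
End Gen.

Theorem theorem2 (R : realType) (n p K : nat) (alpha : 'I_n -> R)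
    (A : 'M[R]_n) (B : 'M[R]_(n, p)) :
  (1 <= K)%N ->
  forall S T : {set 'I_n},
    frank A B alpha K (S :|: T) + frank A B alpha K (S :&: T)
    <= frank A B alpha K S + frank A B alpha K T.
Proof.
move=> _ S T.
have E U : frank A B alpha K U = (\rank (W (Fm K alpha A B) (XS K U)))%:R.
  by rewrite /frank Mrow (eqmxP (rowsub_eq _ _)) imfS.
rewrite !E -!natrD ler_nat.
have -> : XS K (S :|: T) = XS K S :|: XS K T by apply/setP => t; rewrite !inE.
have -> : XS K (S :&: T) = XS K S :&: XS K T by apply/setP => t; rewrite !inE.
exact: W_submod.
Qed.
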